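(* Let $\Pi_n=\{\pi_1,\ldots,\pi_n\}$ be a finite set of policies of a discrete mean-field game (setting in the context). Consider the protocol: for $t=1,\ldots,T$, a learner chooses $\nu_t\in\Delta(\Pi_n)$ based on the past reward functions $R_1,\ldots,R_{t-1}$, then observes the linear reward function $R_t(\nu)=\mathbb E_{\pi\sim\nu}[J(\pi,\mu(\nu_t))]$ on $\Delta(\Pi_n)$ and receives $R_t(\nu_t)$. Let $\rho=\frac1T\sum_{t=1}^T\delta_{\nu_t}$. (i) If the learner has external regret $\max_{\nu\in\Delta(\Pi_n)}\sum_{t=1}^TR_t(\nu)-\sum_{t=1}^TR_t(\nu_t)=O(\sqrt T)$, then $\rho$ is an $O(1/\sqrt T)$-mean-field coarse correlated equilibrium of the restricted game, i.e. $\max_{i}\mathbb E_{\nu\sim\rho}\big[J(\pi_i,\mu(\nu))-\mathbb E_{\pi\sim\nu}J(\pi,\mu(\nu))\big]=O(1/\sqrt T)$. (ii) If the learner has internal regret $\max_{i,j}\sum_{t=1}^T\nu_t(\pi_i)\big(J(\pi_j,\mu(\nu_t))-J(\pi_i,\mu(\nu_t))\big)=O(\sqrt T)$, then $\rho$ is an $O(1/\sqrt T)$-mean-field correlated equilibrium of the restricted game, i.e. $\max_{i,j}\mathbb E_{\nu\sim\rho}\big[\nu(\pi_i)\big(J(\pi_j,\mu(\nu))-J(\pi_i,\mu(\nu))\big)\big]=O(1/\sqrt T)$.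
   Context: A discrete mean-field game consists of a finite state set $\mathcal X$, a finite action set $\mathcal A$, a reward $r:\mathcal X\times\mathcal A\times\Delta(\mathcal X)\to\mathbb R$, transition probabilities $p(x'\mid x,a)$ not depending on the population distribution, and an initial distribution $\mu_0\in\Delta(\mathcal X)$. A policy is $\pi:\mathcal X\to\Delta(\mathcal A)$; $\mu^\pi$ is its state occupancy measure (either $\gamma$-discounted or finite-horizon with time in the state), and $J(\pi,\mu)=\sum_{x,a}\mu^\pi(x)\pi(x,a)r(x,a,\mu)$ is the expected payoff. For $\nu\in\Delta(\Pi_n)$, $\mu(\nu)=\sum_\pi\nu(\pi)\mu^\pi$. A correlation device is a distribution $\rho$ over $\Delta(\Pi_n)$ (here finitely supported). *)

(* Defs.v *)
From HB Require Import structures.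
From mathcomp Require Import all_boot all_order all_algebra.
Set Implicit Arguments. Unset Strict Implicit. Unset Printing Implicit Defensive.
Import Order.TTheory GRing.Theory Num.Theory.
Local Open Scope ring_scope.

Section MFG.
Variables (R : rcfType) (X A : finType).

Definition is_dist (T : finType) (d : {ffun T -> R}) : Prop :=
  (forall x, 0 <= d x) /\ \sum_x d x = 1.

(* A discrete mean-field game: reward r x a mu, transitions p x a x'
   (independent of the population distribution), initial distribution mu0. *)
Record mfg := MFG {
  mfg_r : X -> A -> {ffun X -> R} -> R;
  mfg_p : X -> A -> {ffun X -> R};
  mfg_mu0 : {ffun X -> R} }.

Definition valid_mfg (G : mfg) : Prop :=
  (forall x a, is_dist (mfg_p G x a)) /\ is_dist (mfg_mu0 G).

Definition policy := {ffun X -> {ffun A -> R}}.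
Definition is_policy (pi : policy) : Prop := forall x, is_dist (pi x).

Fixpoint state_dist (G : mfg) (pi : policy) (h : nat) : {ffun X -> R} :=
  match h with
  | 0 => mfg_mu0 G
  | h'.+1 => let d := state_dist G pi h' in
      [ffun y => \sum_x \sum_a d x * pi x a * mfg_p G x a y]
  end.

Definition occ (H : nat) (G : mfg) (pi : policy) : {ffun X -> R} :=
  [ffun x => H%:R^-1 * \sum_(h < H) state_dist G pi h x].

Definition J (H : nat) (G : mfg) (pi : policy) (mu : {ffun X -> R}) : R :=
  \sum_x \sum_a occ H G pi x * pi x a * mfg_r G x a mu.

(* mu(nu) = sum_pi nu(pi) mu^pi, for nu in Delta(Pi_n), Pi_n = {pis i} *)
Definition mu_of (H : nat) (G : mfg) (n : nat) (pis : 'I_n -> policy)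
  (nu : {ffun 'I_n -> R}) : {ffun X -> R} :=
  [ffun x => \sum_i nu i * occ H G (pis i) x].

Definition reward (H : nat) (G : mfg) (n : nat) (pis : 'I_n -> policy)
  (nut nu : {ffun 'I_n -> R}) : R :=
  \sum_i nu i * J H G (pis i) (mu_of H G pis nut).

End MFG.

(* Main.v *)
Require Import Defs.
From HB Require Import structures.
From mathcomp Require Import all_boot all_order all_algebra.
From mathcomp Require Import ring.
Import Order.TTheory GRing.Theory Num.Theory.
Local Open Scope ring_scope.

Lemma scale_lem (R : rcfType) (T : nat) (S C : R) : (0 < T)%N ->
  S <= C * Num.sqrt (T%:R) -> T%:R^-1 * S <= C / Num.sqrt (T%:R).
Proof.
move=> T0 HS.
have Tp : (0 : R) < T%:R by rewrite ltr0n.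
have sp : 0 < Num.sqrt (T%:R : R) by rewrite sqrtr_gt0.
have -> : C / Num.sqrt (T%:R) = T%:R^-1 * (C * Num.sqrt (T%:R)).
  rewrite -{2}(sqr_sqrtr (ltW Tp)) expr2.
  by field; rewrite ?gt_eqF.
by rewrite ler_pM2l ?invr_gt0.
Qed.

(* nu T t : the distribution chosen at round t (t < T) when the horizon is T. *)
Theorem mainTheorem4 (R : rcfType) (X A : finType) (G : mfg R X A) (H : nat)
  (n : nat) (pis : 'I_n -> policy R X A) (nu : nat -> nat -> {ffun 'I_n -> R}) :
  valid_mfg G -> (0 < H)%N -> (forall i, is_policy (pis i)) ->
  (forall T t, (t < T)%N -> is_dist (nu T t)) ->
  (* (i) external regret O(sqrt T) ==> O(1/sqrt T)-mean-field CCE *)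
  ((exists C : R, exists T0 : nat, forall T : nat, (T0 <= T)%N -> (0 < T)%N ->
      forall nu' : {ffun 'I_n -> R}, is_dist nu' ->
        \sum_(t < T) reward H G pis (nu T t) nu'
        - \sum_(t < T) reward H G pis (nu T t) (nu T t)
        <= C * Num.sqrt (T%:R)) ->
   exists C : R, exists T0 : nat, forall T : nat, (T0 <= T)%N -> (0 < T)%N ->
     forall i : 'I_n,
       T%:R^-1 * \sum_(t < T)
         (J H G (pis i) (mu_of H G pis (nu T t))
          - \sum_k nu T t k * J H G (pis k) (mu_of H G pis (nu T t)))
       <= C / Num.sqrt (T%:R))
  /\
  (* (ii) internal regret O(sqrt T) ==> O(1/sqrt T)-mean-field CE *)
  ((exists C : R, exists T0 : nat, forall T : nat, (T0 <= T)%N -> (0 < T)%N ->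
      forall i j : 'I_n,
        \sum_(t < T) nu T t i * (J H G (pis j) (mu_of H G pis (nu T t))
                                - J H G (pis i) (mu_of H G pis (nu T t)))
        <= C * Num.sqrt (T%:R)) ->
   exists C : R, exists T0 : nat, forall T : nat, (T0 <= T)%N -> (0 < T)%N ->
     forall i j : 'I_n,
       T%:R^-1 * \sum_(t < T) nu T t i * (J H G (pis j) (mu_of H G pis (nu T t))
                                - J H G (pis i) (mu_of H G pis (nu T t)))
       <= C / Num.sqrt (T%:R)).
Proof.
move=> _ _ _ Hd; split.
- move=> [C [T0 HC]]; exists C, T0 => T HT Tp i.
  apply: scale_lem => //.
  pose d : {ffun 'I_n -> R} := [ffun k => if k == i then 1 else 0].
  have dd : is_dist d.
    split; first by move=> k; rewrite ffunE; case: (k == i).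
    rewrite (bigD1 i) //= big1 ?ffunE ?eqxx ?addr0 // => k /negbTE nk.
    by rewrite ffunE nk.
  have := HC T HT Tp d dd.
  rewrite /reward.
  move=> Hle; apply: le_trans Hle; rewrite -sumrB le_eqVlt; apply/orP; left; apply/eqP.
  apply: eq_bigr => t _; congr (_ - _).
  rewrite (bigD1 i) //= big1 ?ffunE ?eqxx ?addr0 ?mul1r // => k /negbTE nk.
  by rewrite ffunE nk mul0r.
- move=> [C [T0 HC]]; exists C, T0 => T HT Tp i j.
  exact: scale_lem (HC T HT Tp i j).
Qed.
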